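(* Let $\phi$ be a formula of Full Modal Team Logic $\mathcal{FMTL}$, let $(M,X)$ be a team model over a set $Prop$ of letters containing the letters of $\phi$, and let $p$ be a letter. If $(M,X)\models\tilde\exists p\,\phi$, then there is a team model $(K,Z)$ with $(K,Z)\rightleftharpoons_{Prop\setminus\{p\}}(M,X)$ and $(K,Z)\models\phi$.
   Context: Kripke models $M=(W,R,V)$, $V:W\to\mathcal P(Prop)$; team models $(M,X)$, $X\subseteq W$. Formulas of $\mathcal{FMTL}$: $p,\neg p,\bot,NE,\phi_1\wedge\phi_2,\phi_1\otimes\phi_2,\phi_1\vee\phi_2,\Diamond\phi,\Box\phi$. Team semantics: $(M,X)\models p$ iff $p\in V(s)$ for all $s\in X$; $\neg p$ iff $p\notin V(s)$ for all $s\in X$; $\bot$ iff $X=\emptyset$; $NE$ iff $X\neq\emptyset$; $\wedge$ componentwise; $\vee$: $(M,X)$ satisfies one of the disjuncts; $\otimes$: $X=X_1\cup X_2$ with $(M,X_i)\models\phi_i$; $(M,X)\models\Diamond\phi$ iff $(M,Y)\models\phi$ for some $Y$ such that every $x\in X$ has an $R$-successor in $Y$ and every $y\in Y$ is an $R$-successor of some $x\in X$; $(M,X)\models\Box\phi$ iff $(M,R[X])\models\phi$, $R[X]$ the set of successors of elements of $X$. For a set $\mathcal P$ of letters, $(M,w)\rightleftharpoons_{\mathcal P}(N,v)$: some relation containing $(w,v)$ has all pairs agreeing on letters of $\mathcal P$ and satisfying forth and back conditions; $(M,X)\rightleftharpoons_{\mathcal P}(N,Y)$: each $x\in X$ is $\mathcal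 P$-bisimilar to some $y\in Y$ and each $y\in Y$ to some $x\in X$. $(M,X)\models\tilde\exists p\,\phi$ iff there is $(M',X')$ with $(M',X')\rightleftharpoons_{\mathcal L(\phi)\setminus\{p\}}(M,X)$ and $(M',X')\models\phi$, where $\mathcal L(\phi)$ is the set of letters of $\phi$. *)

(* Defs.v *)
Record kmodel (L : Type) : Type := KModel {
  world : Type;
  rel : world -> world -> Prop;
  val : world -> L -> Prop }.
Arguments world {L} _.
Arguments rel {L} _ _ _.
Arguments val {L} _ _ _.

Definition model_over {L : Type} (P : L -> Prop) (M : kmodel L) : Prop :=
  forall w q, val M w q -> P q.

Definition team {L : Type} (M : kmodel L) := world M -> Prop.

Inductive fmtl (L : Type) : Type :=
| FAtom : L -> fmtl L
| FNeg : L -> fmtl L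
| FBot : fmtl L
| FNE : fmtl L
| FAnd : fmtl L -> fmtl L -> fmtl L
| FTensor : fmtl L -> fmtl L -> fmtl L
| FOr : fmtl L -> fmtl L -> fmtl L
| FDia : fmtl L -> fmtl L
| FBox : fmtl L -> fmtl L.
Arguments FAtom {L} _. Arguments FNeg {L} _. Arguments FAnd {L} _ _. Arguments FTensor {L} _ _. Arguments FOr {L} _ _. Arguments FDia {L} _. Arguments FBox {L} _.
Arguments FBot {L}.
Arguments FNE {L}.

Fixpoint letters {L : Type} (phi : fmtl L) (q : L) : Prop :=
  match phi with
  | FAtom p | FNeg p => q = p
  | FBot | FNE => False
  | FAnd a b | FTensor a b | FOr a b => letters a q \/ letters b q
  | FDia a | FBox a => letters a q
  end.

Definition img {L : Type} {M : kmodel L} (X : team M) : team M :=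
  fun y => exists x, X x /\ rel M x y.

Fixpoint sat {L : Type} (M : kmodel L) (X : team M) (phi : fmtl L) : Prop :=
  match phi with
  | FAtom p => forall s, X s -> val M s p
  | FNeg p => forall s, X s -> ~ val M s p
  | FBot => forall s, ~ X s
  | FNE => exists s, X s
  | FAnd a b => sat M X a /\ sat M X b
  | FTensor a b => exists X1 X2 : team M,
      (forall s, X s <-> X1 s \/ X2 s) /\ sat M X1 a /\ sat M X2 b
  | FOr a b => sat M X a \/ sat M X b
  | FDia a => exists Y : team M,
      (forall x, X x -> exists y, Y y /\ rel M x y) /\
      (forall y, Y y -> exists x, X x /\ rel M x y) /\ sat M Y a
  | FBox a => sat M (img X) a
  end.

Definition bisim_pt {L : Type} (Q : L -> Prop) (M : kmodel L) (w : world M)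
    (N : kmodel L) (v : world N) : Prop :=
  exists Z : world M -> world N -> Prop, Z w v /\
    forall a b, Z a b ->
      (forall q, Q q -> (val M a q <-> val N b q)) /\
      (forall a', rel M a a' -> exists b', rel N b b' /\ Z a' b') /\
      (forall b', rel N b b' -> exists a', rel M a a' /\ Z a' b').

Definition bisim_team {L : Type} (Q : L -> Prop) (M : kmodel L) (X : team M)
    (N : kmodel L) (Y : team N) : Prop :=
  (forall x, X x -> exists y, Y y /\ bisim_pt Q M x N y) /\
  (forall y, Y y -> exists x, X x /\ bisim_pt Q M x N y).

Definition sat_bexists {L : Type} (M : kmodel L) (X : team M) (p : L)
    (phi : fmtl L) : Prop :=
  exists (M' : kmodel L) (X' : team M'),
    bisim_team (fun q => letters phi q /\ q <> p) M' X' M X /\ sat M' X' phi.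

(* Main.v *)
Require Import Defs.
From Stdlib Require Import Classical.

Section PM.
Context {L : Type} (K M : kmodel L) (Q : L -> Prop) (f : world K -> world M).
Hypothesis hval : forall k q, Q q -> (val K k q <-> val M (f k) q).
Hypothesis hforth : forall k k', rel K k k' -> rel M (f k) (f k').
Hypothesis hback : forall k a', rel M (f k) a' -> exists k', rel K k k' /\ f k' = a'.

Lemma pm_sat (phi : fmtl L) : (forall q, letters phi q -> Q q) ->
  forall (T : team K) (S : team M), (forall a, S a <-> exists k, T k /\ f k = a) ->
  (sat K T phi <-> sat M S phi).
Proof.
  induction phi as [q|q| | |a IHa b IHb|a IHa b IHb|a IHa b IHb|a IHa|a IHa];
    intros HQ T S HS; simpl in *.
  - split.
    + intros H s Hs. apply HS in Hs as [k [Hk <-]]. apply hval; auto.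
    + intros H k Hk. apply hval; auto. apply H, HS; eauto.
  - split.
    + intros H s Hs. apply HS in Hs as [k [Hk <-]]. rewrite <- hval; auto.
    + intros H k Hk. rewrite hval; auto. apply H, HS; eauto.
  - split.
    + intros H s Hs. apply HS in Hs as [k [Hk _]]. eapply H; eauto.
    + intros H k Hk. apply (H (f k)), HS; eauto.
  - split.
    + intros [k Hk]. exists (f k). apply HS; eauto.
    + intros [s Hs]. apply HS in Hs as [k [Hk _]]; eauto.
  - rewrite (IHa (fun q h => HQ q (or_introl h)) T S HS).
    rewrite (IHb (fun q h => HQ q (or_intror h)) T S HS). tauto.
  - split.
    + intros [T1 [T2 [HU [H1 H2]]]].
      exists (fun a => exists k, T1 k /\ f k = a), (fun a => exists k, T2 k /\ f k = a).
      split; [|split].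
      * intros s. rewrite HS. split.
        -- intros [k [Hk <-]]. apply HU in Hk as [Hk|Hk]; eauto.
        -- intros [[k [Hk <-]]|[k [Hk <-]]]; exists k; split; auto; apply HU; auto.
      * apply (IHa (fun q h => HQ q (or_introl h)) T1); tauto.
      * apply (IHb (fun q h => HQ q (or_intror h)) T2); tauto.
    + intros [S1 [S2 [HU [H1 H2]]]].
      exists (fun k => T k /\ S1 (f k)), (fun k => T k /\ S2 (f k)).
      split; [|split].
      * intros k. split.
        -- intros Hk. assert (S (f k)) by (apply HS; eauto).
           apply HU in H as [H|H]; auto.
        -- intros [[Hk _]|[Hk _]]; auto.
      * apply (IHa (fun q h => HQ q (or_introl h)) _ S1); auto.
        intros s; split.
        -- intros Hs. assert (S s) by (apply HU; auto). apply HS in H as [k [Hk <-]]. eauto.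
        -- intros [k [[_ H] <-]]; auto.
      * apply (IHb (fun q h => HQ q (or_intror h)) _ S2); auto.
        intros s; split.
        -- intros Hs. assert (S s) by (apply HU; auto). apply HS in H as [k [Hk <-]]. eauto.
        -- intros [k [[_ H] <-]]; auto.
  - rewrite (IHa (fun q h => HQ q (or_introl h)) T S HS).
    rewrite (IHb (fun q h => HQ q (or_intror h)) T S HS). tauto.
  - split.
    + intros [Y [H1 [H2 H3]]].
      exists (fun a => exists k, Y k /\ f k = a). split; [|split].
      * intros s Hs. apply HS in Hs as [k [Hk <-]].
        destruct (H1 k Hk) as [y [Hy Hr]]. exists (f y); split; eauto.
      * intros s [y [Hy <-]]. destruct (H2 y Hy) as [k [Hk Hr]].
        exists (f k); split; auto. apply HS; eauto.
      * apply (IHa HQ Y); tauto.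
    + intros [Y [H1 [H2 H3]]].
      exists (fun k' => Y (f k') /\ exists k, T k /\ rel K k k'). split; [|split].
      * intros k Hk. destruct (H1 (f k)) as [y [Hy Hr]]. apply HS; eauto.
        destruct (hback _ _ Hr) as [k' [Hr' <-]]. exists k'; split; eauto.
      * intros y [_ [k [Hk Hr]]]; eauto.
      * apply (IHa HQ _ Y); auto. intros s; split.
        -- intros Hs. destruct (H2 s Hs) as [x [Hx Hr]].
           apply HS in Hx as [k [Hk <-]]. destruct (hback _ _ Hr) as [k' [Hr' <-]].
           exists k'; split; eauto.
        -- intros [k [[H _] <-]]; auto.
  - apply IHa; auto. intros s; split.
    + intros [x [Hx Hr]]. apply HS in Hx as [k [Hk <-]].
      destruct (hback _ _ Hr) as [k' [Hr' <-]]. exists k'; split; auto. exists k; auto.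
    + intros [k' [[k [Hk Hr]] <-]]. exists (f k); split; auto. apply HS; eauto.
Qed.
End PM.

Theorem mainTheorem7 (L : Type) (P : L -> Prop) (phi : fmtl L)
    (M : kmodel L) (X : team M) (p : L) :
  (forall q, letters phi q -> P q) ->
  model_over P M ->
  sat_bexists M X p phi ->
  exists (K : kmodel L) (Z : team K),
    bisim_team (fun q => P q /\ q <> p) K Z M X /\ sat K Z phi.
Proof.
  intros _ _ [M' [X' [[B1 B2] Hs]]].
  set (Qm := fun q => letters phi q /\ q <> p).
  set (W := {ab : world M' * world M | bisim_pt Qm M' (fst ab) M (snd ab)}).
  set (K := KModel L W
    (fun x y => rel M' (fst (proj1_sig x)) (fst (proj1_sig y)) /\
                rel M (snd (proj1_sig x)) (snd (proj1_sig y)))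
    (fun x q => (letters phi q /\ val M' (fst (proj1_sig x)) q) \/
                (~ letters phi q /\ val M (snd (proj1_sig x)) q))).
  exists K, (fun x : W => X' (fst (proj1_sig x)) /\ X (snd (proj1_sig x))).
  split.
  - assert (Hb : forall x : W, bisim_pt (fun q => P q /\ q <> p) K x M (snd (proj1_sig x))).
    { intros x0. exists (fun (k : W) b => snd (proj1_sig k) = b). split; auto.
      intros k b <-. destruct k as [[a b] Hab]. simpl.
      destruct Hab as [Z [HZ HZc]]. simpl in *.
      destruct (HZc a b HZ) as [Hv [Hf Hbk]].
      split; [|split].
      - intros q [Pq Hq]. simpl. split.
        + intros [[Hl H]|[_ H]]; auto. apply Hv; [split|]; auto.
        + intros H. destruct (classic (letters phi q)) as [Hl|Hl]; [left|right]; split; auto.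
          apply Hv; [split|]; auto.
      - intros [[a' b'] Hab'] [_ Hr]. simpl in *. exists b'; auto.
      - intros b' Hr. destruct (Hbk b' Hr) as [a' [Hr' HZ']].
        assert (Hbp : bisim_pt Qm M' a' M b') by (exists Z; auto).
        exists (exist _ (a', b') Hbp). simpl. auto. }
    split.
    + intros x [_ Hx]. exists (snd (proj1_sig x)); auto.
    + intros b Hb'. destruct (B2 b Hb') as [a [Ha Hab]].
      exists (exist _ (a, b) Hab). simpl. split; auto.
  - apply (pm_sat K M' (letters phi) (fun x : W => fst (proj1_sig x))) with (S := X'); auto.
    + intros k q Hq. simpl. split.
      * intros [[_ H]|[H _]]; tauto.
      * intros H; left; auto.
    + intros k k' [H _]; auto.
    + intros [[a b] Hab] a' Hr. simpl in *.
      destruct Hab as [Z [HZ HZc]]. simpl in *.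
      destruct (HZc a b HZ) as [_ [Hf _]]. destruct (Hf a' Hr) as [b' [Hr' HZ']].
      assert (Hbp : bisim_pt Qm M' a' M b') by (exists Z; auto).
      exists (exist _ (a', b') Hbp). simpl. auto.
    + intros a. split.
      * intros Ha. destruct (B1 a Ha) as [b [Hb Hab]].
        exists (exist _ (a, b) Hab). simpl; auto.
      * intros [k [[Hk _] <-]]; auto.
Qed.
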